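(* Let $k$ be a positive integer and let $a_1,\dots,a_k$ and $b_1,\dots,b_k$ be real numbers in $[a,b]$ such that $\sum_{i=1}^k a_i^j=\sum_{i=1}^k b_i^j$ for all integers $1\le j<k$. Then the following are equivalent: (1) $\sum_{i=1}^k a_i^k\ge\sum_{i=1}^k b_i^k$; (2) $\max_i a_i\ge\max_i b_i$; (3) $\sum_{i=1}^k f(a_i)\ge\sum_{i=1}^k f(b_i)$ for every $k$ times differentiable $f:[a,b]\to\mathbb{R}$ with $f^{(k)}\ge 0$. *)

(* Defs.v *)
From Stdlib Require Import Reals.
Open Scope R_scope.

(* Sum over indices 0..k-1 of u i (for k >= 1). *)
Definition sumk (k : nat) (u : nat -> R) : R := sum_f_R0 u (k - 1).

Fixpoint maxR (u : nat -> R) (n : nat) : R :=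
  match n with
  | O => u O
  | S m => Rmax (maxR u m) (u (S m))
  end.

(* l is the derivative of g at x, relative to the interval [a,b]
   (one-sided at the endpoints). *)
Definition deriv_within (a b : R) (g : R -> R) (x l : R) : Prop :=
  limit1_in (fun y => (g y - g x) / (y - x))
            (fun y => a <= y <= b /\ y <> x) l x.

Definition higher_derivs (a b : R) (k : nat) (F : nat -> R -> R) : Prop :=
  forall i, (i < k)%nat -> forall x, a <= x <= b ->
    deriv_within a b (F i) x (F (S i) x).

Definition kdiff_nonneg (a b : R) (k : nat) (f : R -> R) : Prop :=
  exists F : nat -> R -> R,
    F O = f /\ higher_derivs a b k F /\
    (forall x, a <= x <= b -> 0 <= F k x).

(* Main.v *)
Require Import Defs.
From Stdlib Require Import Reals Lra Lia Arith List ClassicalEpsilon.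
Import ListNotations.
Open Scope R_scope.


Fixpoint sm (n : nat) (g : nat -> R) : R :=
  match n with O => 0 | S m => sm m g + g m end.

Lemma sm_S n f : sm (S n) f = sm n f + f n.
Proof. reflexivity. Qed.

Lemma sm_ext n f g : (forall i, (i < n)%nat -> f i = g i) -> sm n f = sm n g.
Proof. induction n; simpl; intros H; [reflexivity|]. rewrite IHn by (intros; apply H; lia). rewrite H by lia. reflexivity. Qed.

Lemma sm_plus n f g : sm n (fun i => f i + g i) = sm n f + sm n g.
Proof. induction n; simpl; [lra|]. rewrite IHn. lra. Qed.

Lemma sm_scal n c f : sm n (fun i => c * f i) = c * sm n f.
Proof. induction n; simpl; [lra|]. rewrite IHn. lra. Qed.

Lemma sm_opp n f : sm n (fun i => - f i) = - sm n f.
Proof. induction n; simpl; [lra|]. rewrite IHn. lra. Qed.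

Lemma sm_minus n f g : sm n (fun i => f i - g i) = sm n f - sm n g.
Proof. induction n; simpl; [lra|]. rewrite IHn. lra. Qed.

Lemma sm_zero n f : (forall i, (i < n)%nat -> f i = 0) -> sm n f = 0.
Proof. intros H. rewrite (sm_ext n f (fun _ => 0)) by auto. clear H. induction n; simpl; lra. Qed.

Lemma sm_shift n f : sm (S n) f = f O + sm n (fun i => f (S i)).
Proof. induction n; simpl in *; [lra|]. rewrite IHn. lra. Qed.

Lemma sm_swap n m (f : nat -> nat -> R) :
  sm n (fun i => sm m (fun j => f i j)) = sm m (fun j => sm n (fun i => f i j)).
Proof. induction n; simpl. - rewrite sm_zero; auto. - rewrite IHn, <- sm_plus. reflexivity. Qed.

Lemma sm_nonneg n f : (forall i, (i < n)%nat -> 0 <= f i) -> 0 <= sm n f.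
Proof. induction n; simpl; intros H; [lra|]. specialize (IHn (fun i Hi => H i ltac:(lia))). specialize (H n ltac:(lia)). lra. Qed.

Lemma sum_f_R0_sm g n : sum_f_R0 g n = sm (S n) g.
Proof. induction n; simpl in *; [lra|]. rewrite IHn. reflexivity. Qed.

Fixpoint e (u : nat -> R) (n : nat) (j : nat) : R :=
  match n with
  | O => match j with O => 1 | _ => 0 end
  | S n' => match j with O => 1 | S j' => e u n' (S j') + u n' * e u n' j' end
  end.

Definition p (u : nat -> R) n m := sm n (fun i => u i ^ m).

Lemma p_S u n m : p u (S n) m = p u n m + u n ^ m.
Proof. reflexivity. Qed.

Lemma e0 u n : e u n 0 = 1.
Proof. destruct n; reflexivity. Qed.

Lemma e_big u n j : (n < j)%nat -> e u n j = 0.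
Proof. revert j; induction n; intros j H; destruct j; simpl; try lia; try reflexivity.
  rewrite !IHn by lia. ring. Qed.

Definition Em1 (u : nat -> R) n l := match l with O => 0 | S l' => e u n l' end.

Lemma e_S u n l : e u (S n) l = e u n l + u n * Em1 u n l.
Proof. destruct l; simpl. rewrite e0. ring. ring. Qed.

Definition sg (l : nat) : R := (-1) ^ l.

Lemma sgS l : sg (S l) = - sg l.
Proof. unfold sg; simpl; ring. Qed.

Definition NF u n j := sm (S j) (fun l => sg l * e u n l * p u n (S j - l)) + sg (S j) * INR (S j) * e u n (S j).

Lemma newton u n j : NF u n j = 0.
Proof.
  revert j; induction n; intros j.
  - unfold NF. rewrite sm_shift. unfold p at 1. simpl sm.
    rewrite sm_zero. simpl. ring. intros i _. simpl. ring.
  - unfold NF.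
    set (x := u n).
    assert (HA : sm (S j) (fun l => sg l * e u (S n) l * p u (S n) (S j - l)) =
       sm (S j) (fun l => sg l * e u n l * p u n (S j - l))
     + sm (S j) (fun l => sg l * e u n l * x ^ (S j - l))
     + x * sm (S j) (fun l => sg l * Em1 u n l * p u n (S j - l))
     + x * sm (S j) (fun l => sg l * Em1 u n l * x ^ (S j - l))).
    { rewrite <- !sm_scal, <- !sm_plus. apply sm_ext. intros i _.
      rewrite e_S, p_S. fold x. ring. }
    rewrite HA; clear HA.
    assert (HC : x * sm (S j) (fun l => sg l * Em1 u n l * x ^ (S j - l)) =
                 sg j * e u n j * x - sm (S j) (fun l => sg l * e u n l * x ^ (S j - l))).
    { rewrite sm_shift. simpl Em1. cbv beta.
      replace (sm j (fun i => sg (S i) * e u n i * x ^ (S j - S i))) with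
         (- sm j (fun i => sg i * e u n i * x ^ (j - i))).
      2:{ rewrite <- sm_opp. apply sm_ext. intros i Hi. rewrite sgS. simpl. ring. }
      rewrite (sm_S j (fun l => sg l * e u n l * x ^ (S j - l))).
      replace (sm j (fun l => sg l * e u n l * x ^ (S j - l))) with
         (x * sm j (fun i => sg i * e u n i * x ^ (j - i))).
      2:{ rewrite <- sm_scal. apply sm_ext. intros i Hi. replace (S j - i)%nat with (S (j - i)) by lia. simpl. ring. }
      replace (S j - j)%nat with 1%nat by lia. replace (S j - 0)%nat with (S j) by lia. simpl. ring. }
    rewrite HC; clear HC.
    assert (HB : sm (S j) (fun l => sg l * Em1 u n l * p u n (S j - l)) = sg j * INR j * e u n j).
    { rewrite sm_shift. simpl Em1. cbv beta.
      destruct j.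
      - simpl. unfold sg. simpl. ring.
      - replace (sm (S j) (fun i => sg (S i) * e u n i * p u n (S (S j) - S i))) with
           (- sm (S j) (fun i => sg i * e u n i * p u n (S j - i))).
        2:{ rewrite <- sm_opp. apply sm_ext. intros i Hi. rewrite sgS. simpl. ring. }
        pose proof (IHn j) as H. unfold NF in H. rewrite sgS in H. rewrite sgS. ring_simplify. ring_simplify in H. lra. }
    rewrite HB; clear HB.
    pose proof (IHn j) as H. unfold NF in H.
    rewrite e_S. simpl Em1. rewrite !sgS in *. rewrite S_INR in *. fold x. ring_simplify. ring_simplify in H. exact H.
Qed.

Fixpoint Pi (u : nat -> R) (n : nat) (x : R) : R :=
  match n with O => 1 | S m => Pi u m x * (x - u m) end.

Lemma Pi_expand u n x : Pi u n x = sm (S n) (fun j => sg j * e u n j * x ^ (n - j)).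
Proof.
  induction n.
  - simpl. unfold sg. simpl. ring.
  - simpl Pi. rewrite IHn.
    assert (H1 : sm (S (S n)) (fun j => sg j * e u (S n) j * x ^ (S n - j)) =
      sm (S (S n)) (fun j => sg j * e u n j * x ^ (S n - j)) +
      u n * sm (S (S n)) (fun j => sg j * Em1 u n j * x ^ (S n - j))).
    { rewrite <- sm_scal, <- sm_plus. apply sm_ext. intros i _. rewrite e_S. ring. }
    rewrite H1; clear H1.
    replace (sm (S (S n)) (fun j => sg j * e u n j * x ^ (S n - j))) with
      (x * sm (S n) (fun j => sg j * e u n j * x ^ (n - j))).
    2:{ rewrite (sm_S (S n) (fun j => sg j * e u n j * x ^ (S n - j))). rewrite (e_big u n (S n)) by lia. rewrite <- sm_scal.
        rewrite (sm_ext (S n) (fun j => sg j * e u n j * x ^ (S n - j)) (fun j => x * (sg j * e u n j * x ^ (n - j)))).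
        ring. intros i Hi. replace (S n - i)%nat with (S (n - i)) by lia. simpl. ring. }
    rewrite (sm_shift (S n) (fun j => sg j * Em1 u n j * x ^ (S n - j))). simpl Em1. cbv beta.
    replace (sm (S n) (fun i => sg (S i) * e u n i * x ^ (S n - S i))) with
      (- sm (S n) (fun j => sg j * e u n j * x ^ (n - j))).
    2:{ rewrite <- sm_opp. apply sm_ext. intros i Hi. rewrite sgS. simpl. ring. }
    ring.
Qed.


Lemma sg_nz l : sg l <> 0.
Proof. unfold sg. apply pow_nonzero. lra. Qed.

Lemma sg_sq l : sg l * sg l = 1.
Proof. induction l. unfold sg; simpl; ring. rewrite sgS. nra. Qed.

Lemma e_eq u v k : (forall m, (1 <= m)%nat -> (m < k)%nat -> p u k m = p v k m) ->
  forall j, (j < k)%nat -> e u k j = e v k j.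
Proof.
  intros Hp j. induction j as [j IH] using lt_wf_ind. intros Hj.
  destruct j as [|j]. { rewrite !e0. reflexivity. }
  pose proof (newton u k j) as Hu. pose proof (newton v k j) as Hv. unfold NF in Hu, Hv.
  assert (Hs : sm (S j) (fun l => sg l * e u k l * p u k (S j - l)) = sm (S j) (fun l => sg l * e v k l * p v k (S j - l))).
  { apply sm_ext. intros i Hi. rewrite IH by lia. rewrite Hp by lia. reflexivity. }
  rewrite Hs in Hu.
  assert (H : sg (S j) * INR (S j) * (e u k (S j) - e v k (S j)) = 0) by lra.
  apply Rmult_integral in H. destruct H as [H|H]; [|lra].
  apply Rmult_integral in H. destruct H as [H|H]. exfalso; apply (sg_nz _ H).
  exfalso. apply (not_0_INR (S j)); auto.
Qed.

Lemma Pi_diff u v k x : (forall m, (1 <= m)%nat -> (m < k)%nat -> p u k m = p v k m) ->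
  Pi v k x - Pi u k x = sg k * (e v k k - e u k k).
Proof.
  intros Hp. rewrite !Pi_expand, <- sm_minus, sm_S. rewrite sm_zero.
  - replace (k - k)%nat with O by lia. simpl. ring.
  - intros i Hi. rewrite (e_eq u v k Hp i Hi). ring.
Qed.

Lemma p_diff u v k : (1 <= k)%nat -> (forall m, (1 <= m)%nat -> (m < k)%nat -> p u k m = p v k m) ->
  p u k k - p v k k = INR k * (sg k * (e v k k - e u k k)).
Proof.
  intros Hk Hp. destruct k as [|k]; [lia|].
  pose proof (newton u (S k) k) as Hu. pose proof (newton v (S k) k) as Hv. unfold NF in Hu, Hv.
  rewrite sm_shift in Hu, Hv. cbv beta in Hu, Hv.
  assert (Hs : sm k (fun i => sg (S i) * e u (S k) (S i) * p u (S k) (S k - S i)) =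
               sm k (fun i => sg (S i) * e v (S k) (S i) * p v (S k) (S k - S i))).
  { apply sm_ext. intros i Hi. rewrite (e_eq u v (S k) Hp) by lia. rewrite Hp by lia. reflexivity. }
  rewrite Hs in Hu. rewrite !e0 in Hu, Hv. replace (S k - 0)%nat with (S k) in Hu, Hv by lia.
  unfold sg at 1 in Hu. unfold sg at 1 in Hv. simpl pow in Hu, Hv.
  assert (E : sg (S k) * sg (S k) = 1) by apply sg_sq.
  nra.
Qed.


Lemma W_of_D a b g x l : derivable_pt_lim g x l -> deriv_within a b g x l.
Proof.
  intros H eps Heps. destruct (H eps Heps) as [d Hd]. exists d. split; [apply cond_pos|].
  intros y [[Hy Hne] Hdist]. simpl in *. unfold R_dist in *.
  assert (Hh : y - x <> 0) by lra.
  specialize (Hd (y - x) Hh Hdist). replace (x + (y - x)) with y in Hd by ring. exact Hd.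
Qed.

Lemma D_of_W a b g x l : a < x < b -> deriv_within a b g x l -> derivable_pt_lim g x l.
Proof.
  intros Hx H eps Heps. destruct (H eps Heps) as [alp [Ha Hd]].
  assert (Hp : 0 < Rmin alp (Rmin (x - a) (b - x))).
  { repeat apply Rmin_pos; lra. }
  exists (mkposreal _ Hp). intros h Hh Hlt. simpl in Hlt.
  pose proof (Rmin_l alp (Rmin (x - a) (b - x))).
  pose proof (Rmin_r alp (Rmin (x - a) (b - x))).
  pose proof (Rmin_l (x - a) (b - x)). pose proof (Rmin_r (x - a) (b - x)).
  assert (Hab : Rabs h < x - a /\ Rabs h < b - x) by lra.
  specialize (Hd (x + h)). simpl in Hd. unfold R_dist in Hd.
  replace (x + h - x) with h in Hd by ring. apply Hd.
  split; [|lra]. split; [|lra].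
  destruct Hab as [Hb1 Hb2]. apply Rabs_def2 in Hb1. apply Rabs_def2 in Hb2. lra.
Qed.

Lemma cont_of_W a b g x l : deriv_within a b g x l ->
  forall eps, 0 < eps -> exists d, 0 < d /\ forall y, a <= y <= b -> Rabs (y - x) < d -> Rabs (g y - g x) < eps.
Proof.
  intros H eps Heps. destruct (H 1 Rlt_0_1) as [alp [Ha Hd]].
  assert (Hp : 0 < eps / (Rabs l + 1)).
  { apply Rdiv_lt_0_compat; [lra|]. pose proof (Rabs_pos l); lra. }
  exists (Rmin alp (eps / (Rabs l + 1))). split; [apply Rmin_pos; lra|].
  intros y Hy Hyx. destruct (Req_dec y x) as [->|Hne].
  { replace (g x - g x) with 0 by ring. rewrite Rabs_R0. lra. }
  pose proof (Rmin_l alp (eps / (Rabs l + 1))). pose proof (Rmin_r alp (eps / (Rabs l + 1))).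
  specialize (Hd y). simpl in Hd. unfold R_dist in Hd.
  assert (Hq : Rabs ((g y - g x) / (y - x) - l) < 1) by (apply Hd; split; [split; auto|lra]).
  assert (Hyx0 : y - x <> 0) by lra.
  assert (E : g y - g x = ((g y - g x) / (y - x)) * (y - x)) by (field; auto).
  rewrite E, Rabs_mult.
  assert (Hq2 : Rabs ((g y - g x) / (y - x)) <= Rabs l + 1).
  { pose proof (Rabs_triang_inv ((g y - g x) / (y - x)) l). lra. }
  assert (Hr : Rabs (y - x) < eps / (Rabs l + 1)) by lra.
  pose proof (Rabs_pos (y - x)). pose proof (Rabs_pos l).
  apply Rle_lt_trans with ((Rabs l + 1) * Rabs (y - x)).
  { apply Rmult_le_compat_r; lra. }
  replace eps with ((Rabs l + 1) * (eps / (Rabs l + 1))) by (field; lra).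
  apply Rmult_lt_compat_l; lra.
Qed.

Definition clamp (al be y : R) := Rmin be (Rmax al y).

Lemma clamp_lip al be s t : al <= be -> Rabs (clamp al be s - clamp al be t) <= Rabs (s - t).
Proof. intros H. unfold clamp, Rmin, Rmax. repeat destruct Rle_dec; unfold Rabs; repeat destruct Rcase_abs; lra. Qed.

Lemma clamp_in al be s : al <= be -> al <= clamp al be s <= be.
Proof. intros H. unfold clamp, Rmin, Rmax. repeat destruct Rle_dec; lra. Qed.

Lemma clamp_id al be s : al <= s <= be -> clamp al be s = s.
Proof. intros H. unfold clamp, Rmin, Rmax. repeat destruct Rle_dec; lra. Qed.

Lemma rolle_w a b g g' al be : a <= al -> al < be -> be <= b ->
  (forall x, a <= x <= b -> deriv_within a b g x (g' x)) -> g al = 0 -> g be = 0 ->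
  exists r, al < r < be /\ g' r = 0.
Proof.
  intros H1 H2 H3 Hd Ha Hb.
  set (gc := fun y => g (clamp al be y)).
  assert (Hder : forall x, al < x < be -> derivable_pt_lim gc x (g' x)).
  { intros x Hx. pose proof (D_of_W a b g x (g' x) ltac:(lra) (Hd x ltac:(lra))) as D.
    intros eps Heps. destruct (D eps Heps) as [d Hdd].
    assert (Hp : 0 < Rmin d (Rmin (x - al) (be - x))) by (repeat apply Rmin_pos; try apply cond_pos; lra).
    exists (mkposreal _ Hp). intros h Hh Hlt. simpl in Hlt.
    pose proof (Rmin_l d (Rmin (x - al) (be - x))). pose proof (Rmin_r d (Rmin (x - al) (be - x))).
    pose proof (Rmin_l (x - al) (be - x)). pose proof (Rmin_r (x - al) (be - x)).
    unfold gc. rewrite (clamp_id al be x) by lra.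
    apply Rabs_def2 in Hlt as Hl2.
    rewrite (clamp_id al be (x + h)) by lra. apply Hdd; auto. lra. }
  set (pr := fun x (Hx : al < x < be) => exist (fun l => derivable_pt_lim gc x l) (g' x) (Hder x Hx)).
  assert (Hc : forall x, al <= x <= be -> continuity_pt gc x).
  { intros x Hx. unfold continuity_pt, continue_in, limit1_in, limit_in. intros eps Heps.
    destruct (cont_of_W a b g x (g' x) (Hd x ltac:(lra)) eps Heps) as [d [Hdp Hdd]].
    exists d. split; [lra|]. intros y [_ Hy]. simpl in *. unfold R_dist in *. unfold gc.
    rewrite (clamp_id al be x) by lra.
    pose proof (clamp_lip al be y x ltac:(lra)). rewrite (clamp_id al be x) in H by lra.
    pose proof (clamp_in al be y ltac:(lra)).
    apply Hdd; lra. }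
  assert (Heq : gc al = gc be).
  { unfold gc. rewrite !clamp_id by lra. rewrite Ha, Hb. reflexivity. }
  destruct (Rolle gc al be pr Hc H2 Heq) as [c [P Hc0]].
  exists c. split; auto.
Qed.


Lemma min_list (l : list R) : l <> [] -> exists m, In m l /\ forall x, In x l -> m <= x.
Proof.
  induction l as [|y l IH]; intros H; [congruence|].
  destruct l as [|z l].
  - exists y. split; [left; auto|]. intros x [->|[]]. lra.
  - destruct IH as [m [Hm Hm2]]; [congruence|].
    exists (Rmin y m). split.
    + unfold Rmin; destruct Rle_dec; [left; auto|right; auto].
    + intros x [->|Hx]. apply Rmin_l. pose proof (Rmin_r y m). specialize (Hm2 x Hx). lra.
Qed.

Lemma rolle_step a b : forall m (l : list R) g g',
  (forall x, a <= x <= b -> deriv_within a b g x (g' x)) -> NoDup l -> length l = S m ->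
  (forall x, In x l -> a <= x <= b /\ g x = 0) ->
  exists l', NoDup l' /\ length l' = m /\ (forall y, In y l' -> a <= y <= b /\ g' y = 0) /\
    (forall y, In y l' -> exists x, In x l /\ x < y).
Proof.
  induction m; intros l g g' Hd Hn Hlen Hz.
  - exists []. repeat split; try constructor; simpl; tauto.
  - destruct (min_list l) as [al [Hal Hmin]]. { intros ->. simpl in Hlen. lia. }
    destruct (in_split al l Hal) as [l1 [l2 El]]. subst l.
    set (L := l1 ++ l2).
    assert (HnL : NoDup L) by (apply (NoDup_remove_1 l1 l2 al Hn)).
    assert (HaL : ~ In al L) by (apply (NoDup_remove_2 l1 l2 al Hn)).
    assert (HinL : forall x, In x L -> In x (l1 ++ al :: l2)).
    { intros x Hx. apply in_app_or in Hx. apply in_or_app. destruct Hx; [left|right; right]; auto. }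
    assert (Hgt : forall x, In x L -> al < x).
    { intros x Hx. assert (al <= x) by (apply Hmin, HinL, Hx). destruct (Req_dec al x) as [<-|]; [contradiction|lra]. }
    assert (HlenL : length L = S m).
    { unfold L. rewrite length_app in *. simpl in Hlen. lia. }
    destruct (IHm L g g' Hd HnL HlenL (fun x Hx => Hz x (HinL x Hx))) as [L' [HnL' [HlL' [HzL' HwL']]]].
    destruct (min_list L) as [be [Hbe Hbmin]]. { intros E. rewrite E in HlenL. simpl in HlenL. lia. }
    assert (Hab : al < be) by (apply Hgt; auto).
    destruct (Hz al Hal) as [Hal1 Hal2]. destruct (Hz be (HinL be Hbe)) as [Hbe1 Hbe2].
    destruct (rolle_w a b g g' al be ltac:(lra) Hab ltac:(lra) Hd Hal2 Hbe2) as [r [Hr1 Hr2]].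
    exists (r :: L'). split; [|split; [|split]].
    + constructor; auto. intros Hr. destruct (HwL' r Hr) as [x [Hx Hxr]]. specialize (Hbmin x Hx). lra.
    + simpl. lia.
    + intros y0 [<-|Hy0]; [lra|apply HzL'; auto].
    + intros y0 [<-|Hy0].
      * exists al. split; [auto|lra].
      * destruct (HwL' y0 Hy0) as [x [Hx Hxy]]. exists x. split; auto.
Qed.

Lemma iter_rolle a b : forall n (G : nat -> R -> R) (l : list R),
  (forall i, (i < n)%nat -> forall x, a <= x <= b -> deriv_within a b (G i) x (G (S i) x)) ->
  NoDup l -> length l = S n -> (forall x, In x l -> a <= x <= b /\ G O x = 0) ->
  exists xi, a <= xi <= b /\ G n xi = 0.
Proof.
  induction n; intros G l Hd Hn Hlen Hz.
  - destruct l as [|x l]; simpl in Hlen; [lia|]. exists x. apply Hz. left; auto.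
  - destruct (rolle_step a b (S n) l (G O) (G 1%nat) (Hd O ltac:(lia)) Hn Hlen Hz) as [l' [Hn' [Hl' [Hz' _]]]].
    apply (IHn (fun i => G (S i)) l'); auto.
    intros i Hi. apply Hd. lia.
Qed.


Definition ev n (c : nat -> R) x := sm (S n) (fun j => c j * x ^ j).
Definition ipl n (p : R -> R) l := exists c, c n = l /\ forall x, p x = ev n c x.

Lemma ipl_ext n p r l : (forall x, p x = r x) -> ipl n p l -> ipl n r l.
Proof. intros E [c [H1 H2]]. exists c. split; auto. intros x. rewrite <- E. auto. Qed.

Lemma ipl_const r : ipl 0 (fun _ => r) r.
Proof. exists (fun _ => r). split; auto. intros x. unfold ev. simpl. ring. Qed.

Lemma ipl_raise n p l : ipl n p l -> ipl (S n) p 0.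
Proof.
  intros [c [H1 H2]]. exists (fun j => if Nat.eqb j (S n) then 0 else c j). split.
  - rewrite Nat.eqb_refl. auto.
  - intros x. rewrite H2. unfold ev. rewrite (sm_S (S n)). rewrite Nat.eqb_refl.
    rewrite Rmult_0_l, Rplus_0_r. apply sm_ext. intros i Hi.
    destruct (Nat.eqb_spec i (S n)); [lia|auto].
Qed.

Lemma ipl_add n p r l l' mu : ipl n p l -> ipl n r l' -> ipl n (fun x => p x + mu * r x) (l + mu * l').
Proof.
  intros [c [H1 H2]] [d [H3 H4]]. exists (fun j => c j + mu * d j). split.
  - rewrite H1, H3. auto.
  - intros x. rewrite H2, H4. unfold ev. rewrite <- sm_scal, <- sm_plus. apply sm_ext. intros; ring.
Qed.

Lemma ipl_mulX n p l w : ipl n p l -> ipl (S n) (fun x => (x - w) * p x) l.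
Proof.
  intros [c [H1 H2]].
  set (c0 := fun j => if Nat.leb j n then c j else 0).
  exists (fun j => (match j with O => 0 | S j' => c0 j' end) - w * c0 j). split.
  - unfold c0. rewrite Nat.leb_refl. destruct (Nat.leb_spec (S n) n); [lia|]. rewrite H1. ring.
  - intros x. rewrite H2. unfold ev.
    assert (Hc : forall j, (j < S n)%nat -> c0 j = c j).
    { intros j Hj. unfold c0. destruct (Nat.leb_spec j n); [auto|lia]. }
    rewrite (sm_ext (S (S n)) _ (fun j => (match j with O => 0 | S j' => c0 j' end) * x ^ j + (- w) * (c0 j * x ^ j)))
      by (intros; ring).
    rewrite sm_plus, sm_scal.
    assert (A : sm (S (S n)) (fun j => (match j with O => 0 | S j' => c0 j' end) * x ^ j) = x * sm (S n) (fun j => c j * x ^ j)).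
    { rewrite (sm_shift (S n) (fun j => (match j with O => 0 | S j' => c0 j' end) * x ^ j)).
      rewrite <- sm_scal. rewrite Rmult_0_l, Rplus_0_l. apply sm_ext. intros j Hj. rewrite Hc by auto. simpl. ring. }
    assert (B : sm (S (S n)) (fun j => c0 j * x ^ j) = sm (S n) (fun j => c j * x ^ j)).
    { rewrite (sm_S (S n) (fun j => c0 j * x ^ j)). unfold c0 at 2. destruct (Nat.leb_spec (S n) n); [lia|].
      rewrite Rmult_0_l, Rplus_0_r. apply sm_ext. intros j Hj. rewrite Hc; auto. }
    rewrite A, B. ring.
Qed.

Lemma Pi_ipl w n : ipl n (Pi w n) 1.
Proof.
  induction n.
  - apply (ipl_ext 0 (fun _ => 1)); [intros; reflexivity|apply ipl_const].
  - apply (ipl_ext (S n) (fun x => (x - w n) * Pi w n x)).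
    + intros x. simpl. ring.
    + apply ipl_mulX. auto.
Qed.

Lemma dpl_ext f g x l : (forall y, f y = g y) -> derivable_pt_lim f x l -> derivable_pt_lim g x l.
Proof. intros E H eps Heps. destruct (H eps Heps) as [d Hd]. exists d. intros h Hh Hl. rewrite <- !E. auto. Qed.

Lemma sm_deriv N c x : derivable_pt_lim (fun y => sm N (fun j => c j * y ^ j)) x (sm N (fun j => c j * (INR j * x ^ pred j))).
Proof.
  induction N.
  - simpl. apply (dpl_ext (fct_cte 0)). intros; reflexivity. apply derivable_pt_lim_const.
  - simpl. apply (dpl_ext (plus_fct (fun y => sm N (fun j => c j * y ^ j)) (mult_real_fct (c N) (fun y => y ^ N)))).
    + intros y. unfold plus_fct, mult_real_fct. reflexivity.
    + apply derivable_pt_lim_plus; auto. apply derivable_pt_lim_scal. apply derivable_pt_lim_pow.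
Qed.

Lemma ev_deriv n c x : derivable_pt_lim (ev (S n) c) x (ev n (fun j => c (S j) * INR (S j)) x).
Proof.
  unfold ev. pose proof (sm_deriv (S (S n)) c x) as H.
  replace (sm (S (S n)) (fun j => c j * (INR j * x ^ pred j))) with
    (sm (S n) (fun j => c (S j) * INR (S j) * x ^ j)) in H. exact H.
  rewrite (sm_shift (S n)). cbv beta. rewrite INR_0, Rmult_0_l, Rmult_0_r, Rplus_0_l.
  apply sm_ext. intros; cbn [Nat.pred]; ring.
Qed.

Lemma PD n : forall p l, ipl n p l -> exists D : nat -> R -> R, D O = p /\
  (forall i, (i < n)%nat -> forall x, derivable_pt_lim (D i) x (D (S i) x)) /\
  forall x, D n x = INR (fact n) * l.
Proof.
  induction n; intros p l [c [H1 H2]].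
  - exists (fun _ => p). split; auto. split; [intros; lia|]. intros x. rewrite H2. unfold ev. simpl. rewrite H1. ring.
  - destruct (IHn (ev n (fun j => c (S j) * INR (S j))) (l * INR (S n))) as [D' [E0 [Ed En]]].
    { exists (fun j => c (S j) * INR (S j)). split; [rewrite H1; auto|auto]. }
    exists (fun i => match i with O => p | S i' => D' i' end). split; [auto|split].
    + intros i Hi x. destruct i.
      * rewrite E0. apply (dpl_ext (ev (S n) c)); [intros; rewrite H2; auto|]. apply ev_deriv.
      * apply Ed. lia.
    + intros x. rewrite En. rewrite fact_simpl, mult_INR. ring.
Qed.

Lemma L_poly u v k q : (forall m, (1 <= m)%nat -> (m < k)%nat -> sm k (fun i => u i ^ m) = sm k (fun i => v i ^ m)) ->
  ipl k q 0 -> sm k (fun i => q (u i)) = sm k (fun i => q (v i)).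
Proof.
  intros Hp [c [H1 H2]].
  assert (E : forall w, sm k (fun i => q (w i)) = sm k (fun j => c j * sm k (fun i => w i ^ j))).
  { intros w. rewrite (sm_ext k _ (fun i => sm k (fun j => c j * w i ^ j))).
    - rewrite sm_swap. apply sm_ext. intros j _. rewrite <- sm_scal. reflexivity.
    - intros i _. rewrite H2. unfold ev. rewrite sm_S, H1. ring. }
  rewrite !E. apply sm_ext. intros j Hj. destruct j.
  - reflexivity.
  - rewrite Hp by lia. reflexivity.
Qed.


Lemma Pi_zero w n i : (i < n)%nat -> Pi w n (w i) = 0.
Proof. induction n; intros H; simpl; [lia|]. destruct (Nat.eq_dec i n) as [->|]. ring. rewrite IHn by lia. ring. Qed.

Lemma Pi_nz w n y : (forall i, (i < n)%nat -> w i <> y) -> Pi w n y <> 0.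
Proof. induction n; intros H; simpl; [lra|]. apply Rmult_integral_contrapositive. split.
  apply IHn; intros; apply H; lia. specialize (H n ltac:(lia)). lra. Qed.

Lemma interp (w : nat -> R) (f : R -> R) n : (forall i j, (i < n)%nat -> (j < n)%nat -> i <> j -> w i <> w j) ->
  exists q, ipl n q 0 /\ forall i, (i < n)%nat -> q (w i) = f (w i).
Proof.
  induction n; intros Hd.
  - exists (fun _ => 0). split; [apply ipl_const|intros; lia].
  - destruct IHn as [q' [Hq' Hi']]. { intros i j Hi Hj Hij. apply Hd; auto; lia. }
    assert (Hnz : Pi w n (w n) <> 0). { apply Pi_nz. intros i Hi. apply Hd; lia. }
    set (al := (f (w n) - q' (w n)) / Pi w n (w n)).
    exists (fun x => q' x + al * Pi w n x). split.
    + eapply ipl_raise. apply ipl_add; [exact Hq'|apply Pi_ipl].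
    + intros i Hi. destruct (Nat.eq_dec i n) as [->|Hne].
      * unfold al. field. auto.
      * rewrite Pi_zero by lia. rewrite Hi' by lia. ring.
Qed.

Lemma lim_ext f g D l x : (forall y, f y = g y) -> limit1_in f D l x -> limit1_in g D l x.
Proof. intros E H eps Heps. destruct (H eps Heps) as [al [Ha Hb]]. exists al. split; auto. intros y Hy. rewrite <- E. auto. Qed.

Lemma dw_minus a b f g x l l' : deriv_within a b f x l -> deriv_within a b g x l' ->
  deriv_within a b (fun y => f y - g y) x (l - l').
Proof.
  intros H1 H2. unfold deriv_within in *. eapply lim_ext; [|apply (limit_minus _ _ _ _ _ _ H1 H2)].
  intros y. cbv beta. unfold Rdiv. ring.
Qed.

Lemma NoDup_nodes (w : nat -> R) k : (forall i j, (i < k)%nat -> (j < k)%nat -> i <> j -> w i <> w j) ->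
  NoDup (map w (seq 0 k)).
Proof.
  intros Hd. apply NoDup_map_NoDup_ForallPairs; [|apply seq_NoDup].
  intros i j Hi Hj E. apply in_seq in Hi, Hj. destruct (Nat.eq_dec i j); auto. exfalso. apply (Hd i j); auto; lia.
Qed.

Lemma err_sign a b k (F : nat -> R -> R) (w : nat -> R) q x :
  higher_derivs a b k F -> (forall y, a <= y <= b -> 0 <= F k y) ->
  (forall i j, (i < k)%nat -> (j < k)%nat -> i <> j -> w i <> w j) ->
  (forall i, (i < k)%nat -> a <= w i <= b) ->
  ipl k q 0 -> (forall i, (i < k)%nat -> q (w i) = F O (w i)) ->
  a <= x <= b -> (forall i, (i < k)%nat -> w i <> x) ->
  exists lam, 0 <= lam /\ F O x - q x = lam * Pi w k x.
Proof.
  intros Hh Hpos Hd Hw Hq Hqi Hx Hxn.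
  assert (Hnz : Pi w k x <> 0) by (apply Pi_nz; auto).
  set (lam := (F O x - q x) / Pi w k x).
  assert (Hp : ipl k (fun y => q y + lam * Pi w k y) (0 + lam * 1)) by (apply ipl_add; [auto|apply Pi_ipl]).
  destruct (PD k _ _ Hp) as [D [E0 [Ed En]]].
  set (H := fun i y => F i y - D i y).
  assert (HH : forall i, (i < k)%nat -> forall y, a <= y <= b -> deriv_within a b (H i) y (H (S i) y)).
  { intros i Hi y Hy. unfold H. apply dw_minus. apply Hh; auto. apply W_of_D. apply Ed; auto. }
  destruct (iter_rolle a b k H (x :: map w (seq 0 k)) HH) as [xi [Hxi Hxi0]].
  - constructor. intros Hin. apply in_map_iff in Hin. destruct Hin as [i [Ei Hi]]. apply in_seq in Hi. apply (Hxn i); [lia|auto].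
    apply NoDup_nodes; auto.
  - simpl. rewrite length_map, length_seq. reflexivity.
  - intros y [<-|Hy].
    + split; auto. unfold H. rewrite E0. unfold lam. field. auto.
    + apply in_map_iff in Hy. destruct Hy as [i [<- Hi]]. apply in_seq in Hi. split; [apply Hw; lia|].
      unfold H. rewrite E0. rewrite Pi_zero by lia. rewrite Hqi by lia. ring.
  - exists lam. split.
    + unfold H in Hxi0. rewrite En in Hxi0. specialize (Hpos xi Hxi).
      assert (Hf : 0 < INR (fact k)) by (apply lt_0_INR, lt_O_fact).
      assert (lam = F k xi / INR (fact k)) by (field_simplify_eq; [lra|lra]).
      rewrite H0. apply Rmult_le_pos; [auto|]. left. apply Rinv_0_lt_compat. auto.
    + unfold lam. field. auto.
Qed.


Lemma gap1 (z : R) (l : list R) : exists d, 0 < d /\ forall y, In y l -> y <> z -> d <= Rabs (z - y).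
Proof.
  induction l as [|y0 l [d [Hd H]]].
  - exists 1. split; [lra|]. intros y [].
  - destruct (Req_dec y0 z) as [E|Ne].
    + exists d. split; auto. intros y [<-|Hy] Hne; [congruence|auto].
    + exists (Rmin d (Rabs (z - y0))). split.
      * apply Rmin_pos; auto. apply Rabs_pos_lt. lra.
      * intros y [<-|Hy] Hne. apply Rmin_r. pose proof (Rmin_l d (Rabs (z - y0))). specialize (H y Hy Hne). lra.
Qed.

Lemma gap (l : list R) : exists d, 0 < d /\ forall x y, In x l -> In y l -> x <> y -> d <= Rabs (x - y).
Proof.
  induction l as [|z l [d [Hd H]]].
  - exists 1. split; [lra|]. intros x y [].
  - destruct (gap1 z l) as [d1 [Hd1 H1]].
    exists (Rmin d d1). split; [apply Rmin_pos; auto|].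
    pose proof (Rmin_l d d1). pose proof (Rmin_r d d1).
    intros x y [<-|Hx] [<-|Hy] Hne.
    + congruence.
    + specialize (H1 y Hy (fun E => Hne (eq_sym E))). lra.
    + specialize (H1 x Hx Hne). rewrite Rabs_minus_sym in H1. lra.
    + specialize (H x y Hx Hy Hne). lra.
Qed.

Lemma Pi_pos_prod w v n x : (forall i, (i < n)%nat -> 0 < (x - w i) * (x - v i)) -> 0 < Pi w n x * Pi v n x.
Proof.
  induction n; intros H; simpl; [lra|].
  specialize (IHn (fun i Hi => H i ltac:(lia))). specialize (H n ltac:(lia)).
  replace (Pi w n x * (x - w n) * (Pi v n x * (x - v n))) with ((Pi w n x * Pi v n x) * ((x - w n) * (x - v n))) by ring.
  apply Rmult_lt_0_compat; auto.
Qed.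

Lemma Pi_in w n x : (exists j, (j < n)%nat /\ w j = x) -> Pi w n x = 0.
Proof. intros [j [Hj <-]]. apply Pi_zero; auto. Qed.

Lemma nudge a b k (u v : nat -> R) : a < b -> (forall i, (i < k)%nat -> a <= u i <= b) ->
  (forall i, (i < k)%nat -> a <= v i <= b) ->
  exists w : nat -> R,
    (forall i j, (i < k)%nat -> (j < k)%nat -> i <> j -> w i <> w j) /\
    (forall i, (i < k)%nat -> a <= w i <= b) /\
    (forall i, (i < k)%nat -> exists j, (j < k)%nat /\ w j = v i) /\
    (forall i, (i < k)%nat -> 0 <= Pi v k (u i) -> 0 <= Pi w k (u i)).
Proof.
  intros Hab Hu Hv.
  set (S := a :: b :: map u (seq 0 k) ++ map v (seq 0 k)).
  destruct (gap S) as [d [Hd Hgap]].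
  assert (Sa : In a S) by (left; auto).
  assert (Sb : In b S) by (right; left; auto).
  assert (Su : forall i, (i < k)%nat -> In (u i) S).
  { intros i Hi. right; right. apply in_or_app. left. apply in_map. apply in_seq. lia. }
  assert (Sv : forall i, (i < k)%nat -> In (v i) S).
  { intros i Hi. right; right. apply in_or_app. right. apply in_map. apply in_seq. lia. }
  set (dup := fun i => exists j, (j < i)%nat /\ v j = v i).
  set (sgn := fun i => if Rlt_dec (v i) b then 1 else -1).
  set (eta := fun i => d / (4 + INR i)).
  set (t := fun i => if excluded_middle_informative (dup i) then sgn i * eta i else 0).
  set (w := fun i => v i + t i).
  assert (Heta : forall i, 0 < eta i /\ eta i <= d / 4).
  { intros i. unfold eta. pose proof (pos_INR i). split.
    apply Rdiv_lt_0_compat; lra. unfold Rdiv. apply Rmult_le_compat_l; [lra|]. apply Rinv_le_contravar; lra. }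
  assert (Heta_inj : forall i j, eta i = eta j -> i = j).
  { intros i j E. apply INR_eq. pose proof (pos_INR i). pose proof (pos_INR j).
    assert (Ei : 4 + INR i = d / eta i) by (unfold eta; field; lra).
    assert (Ej : 4 + INR j = d / eta j) by (unfold eta; field; lra).
    rewrite E in Ei. lra. }
  assert (Ht : forall i, Rabs (t i) <= d / 4).
  { intros i. unfold t. destruct excluded_middle_informative.
    - unfold sgn. destruct Rlt_dec; destruct (Heta i); unfold Rabs; destruct Rcase_abs; lra.
    - rewrite Rabs_R0. lra. }
  assert (Hsame : forall i j, v i = v j -> sgn i = sgn j).
  { intros i j E. unfold sgn. rewrite E. reflexivity. }
    assert (Hmin : forall i, exists j, (j <= i)%nat /\ v j = v i /\ ~ dup j).
  { intros i. induction i as [i IH] using lt_wf_ind.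
    destruct (excluded_middle_informative (dup i)) as [[j' [Hj' Ej']]|Nd].
    - destruct (IH j' Hj') as [j [Hj [Ej Nj]]]. exists j. split; [lia|split; auto]. congruence.
    - exists i. split; auto. }
  exists w. split; [|split; [|split]].
  -
    assert (Hgen : forall i j, (i < k)%nat -> (j < k)%nat -> (i < j)%nat -> w i <> w j).
    { intros i j Hi Hj Hij E. unfold w in E.
      destruct (Req_dec (v i) (v j)) as [Evij|Nvij].
      - assert (Dj : dup j) by (exists i; split; auto).
        assert (Htij : t i = t j) by lra.
        unfold t in Htij. destruct (excluded_middle_informative (dup j)) as [_|Nd]; [|contradiction].
        destruct (excluded_middle_informative (dup i)).
        + rewrite (Hsame i j Evij) in Htij. assert (Hs : sgn j <> 0) by (unfold sgn; destruct Rlt_dec; lra).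
          apply Rmult_eq_reg_l in Htij; auto. apply Heta_inj in Htij. lia.
        + assert (Hs : sgn j <> 0) by (unfold sgn; destruct Rlt_dec; lra).
          destruct (Heta j). assert (sgn j * eta j <> 0) by (apply Rmult_integral_contrapositive; split; lra). lra.
      - specialize (Hgap (v i) (v j) (Sv i Hi) (Sv j Hj) Nvij). pose proof (Ht i). pose proof (Ht j).
        revert Hgap H H0. unfold Rabs; repeat destruct Rcase_abs; lra. }
    intros i j Hi Hj Hij. destruct (Nat.lt_total i j) as [Hlt|[Heq|Hgt]].
    + apply Hgen; auto.
    + contradiction.
    + intros E. apply (Hgen j i); auto.
  -
    intros i Hi. unfold w, t. destruct excluded_middle_informative; [|rewrite Rplus_0_r; auto].
    specialize (Hv i Hi). destruct (Heta i). unfold sgn. destruct Rlt_dec.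
    + assert (Nb : v i <> b) by lra. specialize (Hgap b (v i) Sb (Sv i Hi) (fun E => Nb (eq_sym E))).
      revert Hgap. unfold Rabs; destruct Rcase_abs; lra.
    + assert (Eb : v i = b) by lra. assert (Nab : a <> b) by lra. specialize (Hgap a b Sa Sb Nab).
      revert Hgap. unfold Rabs; destruct Rcase_abs; lra.
  -
    intros i Hi. destruct (Hmin i) as [j [Hj [Ej Nj]]]. exists j. split; [lia|].
    unfold w, t. destruct excluded_middle_informative; [contradiction|]. rewrite Rplus_0_r. auto.
  -
    intros l Hl Hpv.
    destruct (classic (exists i, (i < k)%nat /\ v i = u l)) as [[i [Hi Ei]]|Nex].
    + destruct (Hmin i) as [j [Hj [Ej Nj]]].
      rewrite (Pi_in w k (u l)). lra. exists j. split; [lia|].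
      unfold w, t. destruct excluded_middle_informative; [contradiction|]. rewrite Rplus_0_r. congruence.
    + assert (Hp : 0 < Pi w k (u l) * Pi v k (u l)).
      { apply Pi_pos_prod. intros i Hi.
        assert (Ne : u l <> v i) by (intros E; apply Nex; exists i; split; auto).
        specialize (Hgap (u l) (v i) (Su l Hl) (Sv i Hi) Ne). pose proof (Ht i).
        unfold w. revert Hgap H. generalize (t i). intros ti. unfold Rabs; repeat destruct Rcase_abs; nra. }
      nra.
Qed.


Lemma sumk_sm k g : (1 <= k)%nat -> sumk k g = sm k g.
Proof. intros H. unfold sumk. rewrite sum_f_R0_sm. f_equal. lia. Qed.

Lemma maxR_ge u n i : (i <= n)%nat -> u i <= maxR u n.
Proof.
  induction n; intros H; simpl.
  - replace i with O by lia. lra.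
  - destruct (Nat.eq_dec i (S n)) as [->|Ne]. apply Rmax_r.
    eapply Rle_trans; [apply IHn; lia|apply Rmax_l].
Qed.

Lemma maxR_att u n : exists i, (i <= n)%nat /\ maxR u n = u i.
Proof.
  induction n; simpl. exists O; split; auto.
  destruct IHn as [i [Hi E]]. unfold Rmax. destruct Rle_dec.
  - exists (S n); split; auto.
  - exists i; split; auto.
Qed.

Lemma Pi_nonneg w n x : (forall i, (i < n)%nat -> w i <= x) -> 0 <= Pi w n x.
Proof. induction n; intros H; simpl; [lra|]. apply Rmult_le_pos. apply IHn; intros; apply H; lia. specialize (H n ltac:(lia)). lra. Qed.

Lemma Pi_pos w n x : (forall i, (i < n)%nat -> w i < x) -> 0 < Pi w n x.
Proof. induction n; intros H; simpl; [lra|]. apply Rmult_lt_0_compat. apply IHn; intros; apply H; lia. specialize (H n ltac:(lia)). lra. Qed.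

Lemma ipl_pow k : ipl k (fun x => x ^ k) 1.
Proof.
  exists (fun j => if Nat.eqb j k then 1 else 0). split. rewrite Nat.eqb_refl; auto.
  intros x. unfold ev. rewrite sm_S, Nat.eqb_refl. rewrite sm_zero. ring.
  intros i Hi. destruct (Nat.eqb_spec i k); [lia|ring].
Qed.

Theorem mainTheorem6 (k : nat) (a b : R) (u v : nat -> R)
  (hk : (1 <= k)%nat)
  (hu : forall i, (i < k)%nat -> a <= u i <= b)
  (hv : forall i, (i < k)%nat -> a <= v i <= b)
  (hpow : forall j : nat, (1 <= j)%nat -> (j < k)%nat ->
     sumk k (fun i => u i ^ j) = sumk k (fun i => v i ^ j)) :
  (sumk k (fun i => u i ^ k) >= sumk k (fun i => v i ^ k) <->
   maxR u (k - 1) >= maxR v (k - 1)) /\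
  (maxR u (k - 1) >= maxR v (k - 1) <->
   (forall f : R -> R, kdiff_nonneg a b k f ->
      sumk k (fun i => f (u i)) >= sumk k (fun i => f (v i)))).
Proof.
  assert (hp : forall m, (1 <= m)%nat -> (m < k)%nat -> p u k m = p v k m).
  { intros m H1 H2. unfold p. rewrite <- !sumk_sm by auto. auto. }
  set (c := sg k * (e v k k - e u k k)).
  assert (HD : forall x, Pi v k x - Pi u k x = c) by (intros; apply Pi_diff; auto).
  assert (Hpk : p u k k - p v k k = INR k * c) by (apply p_diff; auto).
  assert (Hk0 : 0 < INR k) by (apply lt_0_INR; lia).
  assert (E1 : sumk k (fun i => u i ^ k) >= sumk k (fun i => v i ^ k) <-> 0 <= c).
  { rewrite !sumk_sm by auto. change (p u k k >= p v k k <-> 0 <= c). split; intros H.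
    - apply Rnot_lt_le. intros Hc. assert (INR k * c < 0) by (apply Rmult_pos_neg; auto). lra.
    - assert (0 <= INR k * c) by (apply Rmult_le_pos; lra). lra. }
  assert (Hu0 : forall i, (i < k)%nat -> Pi u k (u i) = 0) by (intros; apply Pi_zero; auto).
  assert (E2 : maxR u (k - 1) >= maxR v (k - 1) <-> 0 <= c).
  { destruct (maxR_att u (k - 1)) as [iu [Hiu Eu]]. destruct (maxR_att v (k - 1)) as [iv [Hiv Ev]].
    split; intros H.
    - rewrite <- (HD (u iu)). rewrite Hu0 by lia. rewrite Rminus_0_r. apply Pi_nonneg.
      intros i Hi. rewrite <- Eu. apply Rle_trans with (maxR v (k - 1)); [apply maxR_ge; lia|lra].
    - apply Rnot_lt_ge. intros Hlt.
      assert (P : 0 < Pi u k (v iv)).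
      { apply Pi_pos. intros i Hi. rewrite <- Ev. apply Rle_lt_trans with (maxR u (k - 1)); [apply maxR_ge; lia|lra]. }
      pose proof (HD (v iv)). rewrite Pi_zero in H0 by lia. lra. }
  assert (E3 : 0 <= c -> forall f : R -> R, kdiff_nonneg a b k f ->
      sumk k (fun i => f (u i)) >= sumk k (fun i => f (v i))).
  { intros Hc f [F [HF0 [Hh Hpos]]]. rewrite !sumk_sm by auto.
    destruct (hu O ltac:(lia)) as [Ha1 Ha2].
    destruct (Req_dec a b) as [Eab|Nab].
    { rewrite (sm_ext k (fun i => f (u i)) (fun i => f (v i))). lra.
      intros i Hi. specialize (hu i Hi). specialize (hv i Hi). f_equal. lra. }
    destruct (nudge a b k u v ltac:(lra) hu hv) as [w [Hwd [Hwab [Hcov Hsgn]]]].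
    destruct (interp w f k Hwd) as [q [Hq Hqi]].
    assert (HL : sm k (fun i => q (u i)) = sm k (fun i => q (v i))) by (apply L_poly; auto).
    assert (Hv0 : forall i, (i < k)%nat -> f (v i) - q (v i) = 0).
    { intros i Hi. destruct (Hcov i Hi) as [j [Hj Ej]]. rewrite <- Ej. rewrite Hqi; auto. ring. }
    assert (Hu1 : forall i, (i < k)%nat -> 0 <= f (u i) - q (u i)).
    { intros i Hi. destruct (classic (exists j, (j < k)%nat /\ w j = u i)) as [[j [Hj Ej]]|Nex].
      - rewrite <- Ej, Hqi; auto. lra.
      - subst f. destruct (err_sign a b k F w q (u i) Hh Hpos Hwd Hwab Hq Hqi (hu i Hi)) as [lam [Hl El]].
        { intros j Hj E. apply Nex. exists j. auto. }
        rewrite El. apply Rmult_le_pos; auto. apply Hsgn; auto.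
        pose proof (HD (u i)) as Hdi. rewrite Hu0 in Hdi by auto. lra. }
    assert (Hs : sm k (fun i => f (u i)) - sm k (fun i => f (v i)) =
                 sm k (fun i => f (u i) - q (u i)) - sm k (fun i => f (v i) - q (v i))).
    { rewrite !sm_minus. lra. }
    rewrite (sm_zero k (fun i => f (v i) - q (v i))) in Hs by auto.
    pose proof (sm_nonneg k _ Hu1). lra. }
  split.
  - rewrite E1, E2. tauto.
  - split.
    + intros H. apply E3. apply E2. auto.
    + intros H. apply E2. apply E1. apply (H (fun x => x ^ k)).
      destruct (PD k _ _ (ipl_pow k)) as [D [D0 [Dd Dk]]].
      exists D. split; auto. split.
      * intros i Hi x Hx. apply W_of_D. apply Dd. auto.
      * intros x Hx. rewrite Dk. rewrite Rmult_1_r. apply pos_INR.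
Qed.
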